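(* Let $T$ be a rooted binary phylogenetic $X$-tree with $|X|=n\geq 2$. Then there exist strictly positive edge lengths $\lambda_1,\ldots,\lambda_{2n-2}$ for $T$ such that (i) the ranking $\pi_T$ is strict, and (ii) deleting the leaf $y=\arg\min_{x\in X}FP_T(x)$ yields a tree $\widetilde T=T_{\widetilde X}$ on $\widetilde X=X\setminus\{y\}$ whose ranking $\pi_{\widetilde T}$ is strict and satisfies $\arg\max_{x\in\widetilde X}FP_{\widetilde T}(x)=\arg\min_{x\in\widetilde X}FP_T(x)$; i.e. the leaf with the second lowest $FP_T$ value has the highest $FP_{\widetilde T}$ value.
   Context: A rooted binary phylogenetic $X$-tree ($X$ finite, $|X|=n$) is a rooted tree whose root $\rho$ has in-degree 0 and out-degree 2, all edges directed away from $\rho$, all other interior vertices have in-degree 1 and out-degree 2, and whose leaves are bijectively labelled by $X$ (for $|X|=1$ it may be a single vertex); it has $2n-2$ edges. Every edge $e$ has a strictly positive length $\lambda_e$. The Fair Proportion index of $x\in X$ is $FP_T(x)=\sum_{e\in P(T;\rho,x)}\lambda_e/D_e$, where $P(T;\rho,x)$ is the path from $\rho$ to $x$ and $D_e$ is the number of leaves descended from $e$. For $Y\subseteq X$, the induced subtree $T_Y$ is obtained from the minimal subtree of $T$ connecting $Y$ by suppressing all non-root vertices of in- and out-degree 1, adding the lengths of merged edges; if the root then has out-degree 1, it and its incident edge are deleted. The ranking $\pi_T$ orders $X$ by decreasing $FP_T$; it is strict if all values $FP_T(x)$ are pairwise distinct. *)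

(* Defs.v *)
From HB Require Import structures.
From mathcomp Require Import all_boot all_order all_algebra.
From mathcomp Require Import reals.
Set Implicit Arguments. Unset Strict Implicit. Unset Printing Implicit Defensive.
Import Order.TTheory GRing.Theory Num.Theory.
Local Open Scope ring_scope.

Inductive ptree (X : Type) :=
  | PLeaf of X
  | PNode of ptree X & ptree X.

Fixpoint pleaves (X : Type) (t : ptree X) : seq X :=
  match t with PLeaf x => [:: x] | PNode l r => pleaves l ++ pleaves r end.

Definition phylo_tree (X : finType) (t : ptree X) : Prop :=
  perm_eq (pleaves t) (enum X).

(* Rooted binary tree with edge lengths: WNode l a r b has edges of
   lengths a (to l) and b (to r). *)
Inductive wtree (X : Type) (R : Type) :=
  | WLeaf of X
  | WNode of wtree X R & R & wtree X R & R.

Fixpoint wshape (X R : Type) (w : wtree X R) : ptree X :=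
  match w with
  | WLeaf x => PLeaf x
  | WNode l _ r _ => PNode (wshape l) (wshape r)
  end.

Fixpoint wleaves (X R : Type) (w : wtree X R) : seq X :=
  match w with WLeaf x => [:: x] | WNode l _ r _ => wleaves l ++ wleaves r end.

Fixpoint pos_lengths (X : Type) (R : realType) (w : wtree X R) : Prop :=
  match w with
  | WLeaf _ => True
  | WNode l a r b => 0 < a /\ 0 < b /\ pos_lengths l /\ pos_lengths r
  end.

(* Fair Proportion index: sum over edges e on the root-to-x path of
   lambda_e / D_e, D_e = number of leaves below e. *)
Fixpoint FP (X : eqType) (R : realType) (w : wtree X R) (x : X) : R :=
  match w with
  | WLeaf _ => 0
  | WNode l a r b =>
      if x \in wleaves l then a / (size (wleaves l))%:R + FP l x
      else if x \in wleaves r then b / (size (wleaves r))%:R + FP r x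
      else 0
  end.

(* Restriction to the leaf set Y: returns the induced subtree of the
   subtree w together with the length of the (suppressed) path above its
   top vertex, to be added to the incoming edge. *)
Fixpoint restr (X : Type) (R : realType) (Y : pred X) (w : wtree X R)
  : option (wtree X R * R) :=
  match w with
  | WLeaf x => if Y x then Some (WLeaf R x, 0) else None
  | WNode l a r b =>
      match restr Y l, restr Y r with
      | Some (l', a'), Some (r', b') => Some (WNode l' (a + a') r' (b + b'), 0)
      | Some (l', a'), None => Some (l', a + a')
      | None, Some (r', b') => Some (r', b + b')
      | None, None => None
      end
  end.

(* Induced subtree T_Y (None iff Y contains no leaf). The length above the
   top vertex is dropped: a root of out-degree 1 is deleted with its edge. *)
Definition induced (X : Type) (R : realType) (Y : pred X) (w : wtree X R)
  : option (wtree X R) :=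
  omap fst (restr Y w).

(* Main.v *)
Require Import Defs.
From HB Require Import structures.
From mathcomp Require Import all_boot all_order all_algebra.
From mathcomp Require Import reals.
From mathcomp Require Import ring lra zify.
From Stdlib Require Import Classical.
Set Implicit Arguments. Unset Strict Implicit. Unset Printing Implicit Defensive.
Import Order.TTheory GRing.Theory Num.Theory.
Local Open Scope ring_scope.

Lemma rem_cat (T : eqType) (x : T) (s1 s2 : seq T) :
  rem x (s1 ++ s2) = if x \in s1 then rem x s1 ++ s2 else s1 ++ rem x s2.
Proof.
elim: s1 => [|a s IH] //=; rewrite in_cons.
case: (eqVneq a x) => [->|ne] /=; first by [].
rewrite IH; by case: ifP.
Qed.

Lemma restr_all (X : Type) (R : realType) (Y : pred X) (w : wtree X R) :
  all Y (wleaves w) -> restr Y w = Some (w, 0).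
Proof.
elim: w => [x|l IHl a r IHr b] /=; first by rewrite andbT => ->.
rewrite all_cat => /andP [Hl Hr]; rewrite IHl // IHr // !addr0 //.
Qed.

Lemma size_pleaves_gt0 (X : Type) (t : ptree X) : (0 < size (pleaves t))%N.
Proof. elim: t => [x|l IHl r IHr] //=; rewrite size_cat; lia. Qed.

Section Cherry.
Variables (R : realType) (X : finType) (y z : X) (target : X -> R) (eps c : R).
Hypotheses (heps : 0 < eps) (hc : 0 < c).

Definition cherry : ptree X := PNode (PLeaf y) (PLeaf z).

Inductive insub : ptree X -> Prop :=
  | ins_here : insub cherry
  | ins_l l r : insub l -> insub (PNode l r)
  | ins_r l r : insub r -> insub (PNode l r).

Definition fc (t : ptree X) : R :=
  match t with PLeaf _ => 0 | PNode _ _ => if pleaves t == [:: y; z] then c else eps end.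

Definition elen (t : ptree X) (acc : R) : R :=
  match t with PLeaf x => target x - acc | PNode _ _ => fc t * (size (pleaves t))%:R end.

Fixpoint bld (t : ptree X) (acc : R) : wtree X R :=
  match t with
  | PLeaf x => WLeaf R x
  | PNode l r => WNode (bld l (acc + fc l)) (elen l acc) (bld r (acc + fc r)) (elen r acc)
  end.

Fixpoint accf (t : ptree X) (x : X) : R :=
  match t with
  | PLeaf _ => 0
  | PNode l r => if x \in pleaves l then fc l + accf l x
                 else if x \in pleaves r then fc r + accf r x else 0
  end.

Lemma wleaves_bld t acc : wleaves (bld t acc) = pleaves t.
Proof. by elim: t acc => [x|l IHl r IHr] acc //=; rewrite IHl IHr. Qed.

Lemma wshape_bld t acc : wshape (bld t acc) = t.
Proof. by elim: t acc => [x|l IHl r IHr] acc //=; rewrite IHl IHr. Qed.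

Lemma FPe t : forall acc x, x \in pleaves t ->
  elen t acc / (size (pleaves t))%:R + FP (bld t (acc + fc t)) x = target x - acc.
Proof.
elim: t => [x0|l IHl r IHr] acc x /=.
  by rewrite inE => /eqP ->; rewrite divr1 addr0.
rewrite !wleaves_bld mem_cat => Hx.
rewrite mulfK; last by rewrite pnatr_eq0 -lt0n size_cat addn_gt0 size_pleaves_gt0.
case: (boolP (x \in pleaves l)) => Hl; first by rewrite IHl //; ring.
by rewrite (negbTE Hl) /= in Hx *; rewrite Hx IHr //; ring.
Qed.

Lemma FP_bld l r acc x : x \in pleaves (PNode l r) -> FP (bld (PNode l r) acc) x = target x - acc.
Proof.
rewrite /= !wleaves_bld mem_cat; case: ifP => Hl /=; first by move=> _; rewrite FPe.
by move=> Hr; rewrite Hr FPe.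
Qed.

Lemma fc_gt0 t : (1 < size (pleaves t))%N -> 0 < fc t.
Proof. by case: t => //= l r _; case: ifP. Qed.

Lemma fc_ge0 t : 0 <= fc t.
Proof. by case: t => //= l r; case: ifP => _; apply: ltW. Qed.

Lemma elen_pos u acc : (forall x, x \in pleaves u -> acc + fc u + accf u x < target x) ->
  0 < elen u acc.
Proof.
case: u => [x0|l r] /= H.
  by have := H x0 (mem_head _ _); rewrite !addr0 subr_gt0.
apply: mulr_gt0; last by rewrite ltr0n size_cat addn_gt0 size_pleaves_gt0.
by case: ifP.
Qed.

Lemma pos_bld t : forall acc, uniq (pleaves t) ->
  (forall x, x \in pleaves t -> acc + accf t x < target x) -> pos_lengths (bld t acc).
Proof.
elim: t => [x0|l IHl r IHr] acc //=.
rewrite cat_uniq => /and3P [ul dis ur] H.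
have Hl : forall x, x \in pleaves l -> acc + fc l + accf l x < target x.
  move=> x xl; have := H x; rewrite mem_cat xl /= => /(_ isT); by rewrite addrA.
have Hr : forall x, x \in pleaves r -> acc + fc r + accf r x < target x.
  move=> x xr; have := H x; rewrite mem_cat xr orbT => /(_ isT) /=.
  have -> : (x \in pleaves l) = false.
    by apply/negP => xl; move/hasP: dis; apply; exists x.
  by rewrite addrA.
split; first exact: elen_pos.
split; first exact: elen_pos.
split; [apply: IHl | apply: IHr] => //.
Qed.

Lemma accf_ge0 t x : 0 <= accf t x.
Proof.
elim: t => [x0|l IHl r IHr] //=.
by case: ifP => _; [|case: ifP => _ //]; apply: addr_ge0 => //; apply: fc_ge0.
Qed.

Lemma size_pleaves_eq1 (u : ptree X) : size (pleaves u) = 1%N -> exists x, u = PLeaf x.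
Proof.
case: u => [x|l r] /=; first by exists x.
by rewrite size_cat; have := size_pleaves_gt0 l; have := size_pleaves_gt0 r; lia.
Qed.

Lemma accf_other t x : x != y -> x != z ->
  accf t x <= eps * (size (pleaves t))%:R.
Proof.
move=> xy xz; elim: t => [x0|l IHl r IHr] /=.
  by rewrite mulr_ge0 // ltW.
have fcle u : x \in pleaves u -> fc u <= eps.
  case: u => [x0|a b] /=; first by move=> _; apply: ltW.
  case: eqP => [->|_ _]; last by [].
  by rewrite !inE (negbTE xy) (negbTE xz).
have hl := size_pleaves_gt0 l; have hr := size_pleaves_gt0 r.
rewrite size_cat natrD mulrDr.
case: ifP => xl.
  have := fcle _ xl; have : 0 <= eps * (size (pleaves r))%:R by rewrite mulr_ge0 // ltW.
  have : eps <= eps * (size (pleaves r))%:R.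
    by rewrite ler_pMr // ler1n size_pleaves_gt0.
  move: IHl; lra.
case: ifP => xr.
  have := fcle _ xr.
  have : eps <= eps * (size (pleaves l))%:R.
    by rewrite ler_pMr // ler1n size_pleaves_gt0.
  move: IHr; lra.
by rewrite addr_ge0 // mulr_ge0 // ltW.
Qed.

Lemma accf_size2 u x : size (pleaves u) = 2%N -> accf u x = 0.
Proof.
case: u => [x0|a b] //= /eqP; rewrite size_cat.
have ha := size_pleaves_gt0 a; have hb := size_pleaves_gt0 b.
move=> /eqP E.
have [a0 ->] : exists a0, a = PLeaf a0 by apply: size_pleaves_eq1; lia.
have [b0 ->] : exists b0, b = PLeaf b0 by apply: size_pleaves_eq1; lia.
by rewrite /=; case: ifP => _; [|case: ifP => _]; rewrite ?addr0.
Qed.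

Lemma accf_child u x : eps <= c -> (accf u x <= c + eps * (size (pleaves u))%:R) ->
   fc u + accf u x <= c + eps * (size (pleaves u))%:R + eps.
Proof.
move=> ec; case: u => [x0|a b] H; first by rewrite /= add0r !addr_ge0 ?mulr_ge0 // ltW.
case: (boolP (pleaves (PNode a b) == [:: y; z])) => E.
  have -> : fc (PNode a b) = c by rewrite /= -/(pleaves (PNode a b)) E.
  rewrite accf_size2 ?(eqP E) //.
  by rewrite addr0 -addrA lerDl addr_ge0 ?mulr_ge0 // ltW.
have -> : fc (PNode a b) = eps by rewrite /= -/(pleaves (PNode a b)) (negbTE E).
lra.
Qed.

Lemma accf_yz t x : eps <= c -> accf t x <= c + eps * (size (pleaves t))%:R.
Proof.
move=> ec; elim: t => [x0|l IHl r IHr] /=.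
  by rewrite addr_ge0 ?mulr_ge0 // ltW.
have hl : eps <= eps * (size (pleaves l))%:R by rewrite ler_pMr // ler1n size_pleaves_gt0.
have hr : eps <= eps * (size (pleaves r))%:R by rewrite ler_pMr // ler1n size_pleaves_gt0.
rewrite size_cat natrD mulrDr.
have := accf_child ec IHl; have := accf_child ec IHr.
case: ifP => _; first lra.
case: ifP => _; first lra.
move=> _ _; apply: addr_ge0; first exact: ltW.
by apply: addr_ge0; apply: mulr_ge0 => //; apply: ltW.
Qed.

Lemma insub_mem t : insub t -> y \in pleaves t /\ z \in pleaves t.
Proof.
elim=> [|l r _ [H1 H2]|l r _ [H1 H2]] /=; first by rewrite !inE !eqxx orbT.
  by rewrite !mem_cat H1 H2.
by rewrite !mem_cat H1 H2 !orbT.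
Qed.

Lemma insub_size t : insub t -> (2 <= size (pleaves t))%N.
Proof.
elim=> [|l r _ H|l r _ H] //=; rewrite size_cat.
  by have := size_pleaves_gt0 r; lia.
by have := size_pleaves_gt0 l; lia.
Qed.

Lemma insub_strict t : insub t -> t <> cherry -> (2 < size (pleaves t))%N.
Proof.
case=> [|l r H|l r H] //= _; rewrite size_cat; have := insub_size H.
  by have := size_pleaves_gt0 r; lia.
by have := size_pleaves_gt0 l; lia.
Qed.

Lemma fc_eps u : (2 < size (pleaves u))%N -> fc u = eps.
Proof.
case: u => [x0|a b] //=; case: eqP => // E; by rewrite E.
Qed.

Lemma elen_node u acc : (1 < size (pleaves u))%N -> elen u acc = fc u * (size (pleaves u))%:R.
Proof. by case: u. Qed.

Lemma ratio_bounds (s : nat) : (3 <= s)%N ->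
  eps <= eps * s%:R / (s.-1)%:R <= 2 * eps.
Proof.
move=> hs; have kpos : 0 < (s.-1)%:R :> R by rewrite ltr0n; lia.
have hs' : s%:R = (s.-1)%:R + 1 :> R by rewrite natr1 prednK //; lia.
have e : eps * s%:R / (s.-1)%:R = eps + eps / (s.-1)%:R.
  by rewrite hs'; field; rewrite gt_eqF.
have k1 : 1 <= (s.-1)%:R :> R by rewrite ler1n; lia.
have h1 : 0 <= eps / (s.-1)%:R by rewrite divr_ge0 // ltW.
have h2 : eps / (s.-1)%:R <= eps.
  by rewrite ler_pdivrMr // ler_peMr // ltW.
rewrite e; apply/andP; split; lra.
Qed.

Lemma notin_all (s : seq X) : y \notin s -> all (fun x => x != y) s.
Proof. by move=> H; apply/allP => x xs; apply/eqP => E; rewrite -E xs in H. Qed.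

Lemma insub_yz t : insub t -> uniq (pleaves t) -> y != z.
Proof.
elim=> [|l r _ IH|l r _ IH] /=; first by rewrite inE andbT.
  by rewrite cat_uniq => /and3P [ul _ _]; apply: IH.
by rewrite cat_uniq => /and3P [_ _ ur]; apply: IH.
Qed.

Lemma key t : insub t -> uniq (pleaves t) -> forall acc, exists w' a',
 [/\ restr (fun x => x != y) (bld t acc) = Some (w', a'),
     wleaves w' = rem y (pleaves t),
     (t = cherry -> w' = WLeaf R z /\ a' = target z - acc) &
     (t <> cherry -> a' = 0 /\
       (forall x, x \in pleaves t -> x != y -> x != z ->
          target x - acc <= FP w' x <= target x - acc + 2 * accf t x) /\
       target z - acc + c <= FP w' z)].
Proof.
elim=> [|l r Hl IH|l r Hr IH] U acc.
- move: U => /=; rewrite andbT inE => yz.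
  exists (WLeaf R z), (target z - acc + 0).
  split => //=.
  + by rewrite eqxx eq_sym yz.
  + by rewrite eqxx.
  + by rewrite addr0.
- move: U; rewrite /= cat_uniq => /and3P [ul dis ur].
  have [yl zl] := insub_mem Hl.
  have nl x : x \in pleaves r -> x \notin pleaves l.
    by move=> xr; apply/negP => xl; move/hasP: dis; apply; exists x.
  have yr : y \notin pleaves r by apply/negP => /nl; rewrite yl.
  have zr : z \notin pleaves r by apply/negP => /nl; rewrite zl.
  have [w' [a' [E1 E2 E3 E4]]] := IH ul (acc + fc l).
  exists (WNode w' (elen l acc + a') (bld r (acc + fc r)) (elen r acc + 0)), 0.
  have ncher : PNode l r <> cherry.
    by move=> [El _]; have := insub_size Hl; rewrite El.
  split.
  + by rewrite /= E1 restr_all // wleaves_bld notin_all.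
  + by rewrite /= E2 wleaves_bld rem_cat yl.
  + by move=> E; exfalso; apply: ncher.
  + move=> _; split => //.
  have Hrx x : x \in pleaves r -> x \notin wleaves w'.
    move=> xr; rewrite E2 mem_rem_uniq // inE; apply/negP => /andP [_ xl].
    by move: (nl x xr); rewrite xl.
  have FPr x : x \in pleaves r -> FP (WNode w' (elen l acc + a') (bld r (acc + fc r)) (elen r acc + 0)) x = target x - acc.
    move=> xr /=; rewrite (negbTE (Hrx x xr)) wleaves_bld xr addr0; exact: FPe.
  have accr x : x \in pleaves r -> accf (PNode l r) x = fc r + accf r x.
    by move=> xr /=; rewrite (negbTE (nl x xr)) xr.
  have accl x : x \in pleaves l -> accf (PNode l r) x = fc l + accf l x.
    by move=> xl /=; rewrite xl.
  case: (classic (l = cherry)) => [Elc|Nlc].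
  * subst l; have [Ew Ea] := E3 erefl; subst w' a'.
    have fcc : fc cherry = c by rewrite /= eqxx.
    split.
      move=> x; rewrite mem_cat => /orP [xl|xr] xy xz.
        by move: xl; rewrite !inE (negbTE xy) (negbTE xz).
      rewrite FPr // (negbTE (nl x xr)) xr lexx /= lerDl.
      by apply: mulr_ge0 => //; apply: addr_ge0; [exact: fc_ge0|exact: accf_ge0].
    rewrite /= inE eqxx /= divr1 addr0 eqxx; lra.
  * have [Ea [B1 B2]] := E4 Nlc; subst a'.
    have s3 := insub_strict Hl Nlc.
    have fcl : fc l = eps by apply: fc_eps.
    have el : elen l acc = eps * (size (pleaves l))%:R by rewrite elen_node ?fcl //; lia.
    have sw : size (wleaves w') = (size (pleaves l)).-1 by rewrite E2 size_rem.
    have [Q1 Q2] := andP (ratio_bounds s3).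
    have inw x : x \in pleaves l -> x != y -> x \in wleaves w'.
      by move=> xl xy; rewrite E2 mem_rem_uniq // inE xy xl.
    split.
      move=> x; rewrite mem_cat => /orP [xl|xr] xy xz; last first.
        rewrite FPr // (negbTE (nl x xr)) xr lexx /= lerDl.
        by apply: mulr_ge0 => //; apply: addr_ge0; [exact: fc_ge0|exact: accf_ge0].
      rewrite /= inw // addr0 el sw xl fcl.
      have := B1 x xl xy xz; rewrite fcl => /andP [b1 b2].
      apply/andP; split; lra.
    have zy : z != y by rewrite eq_sym (insub_yz Hl ul).
    rewrite /= inw // addr0 el sw; move: B2; rewrite fcl; lra.
- move: U; rewrite /= cat_uniq => /and3P [ul dis ur].
  have [yr zr] := insub_mem Hr.
  have nl x : x \in pleaves r -> x \notin pleaves l.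
    by move=> xr; apply/negP => xl; move/hasP: dis; apply; exists x.
  have yl : y \notin pleaves l by apply: nl.
  have zl : z \notin pleaves l by apply: nl.
  have [w' [a' [E1 E2 E3 E4]]] := IH ur (acc + fc r).
  exists (WNode (bld l (acc + fc l)) (elen l acc + 0) w' (elen r acc + a')), 0.
  have ncher : PNode l r <> cherry.
    by move=> [_ El]; have := insub_size Hr; rewrite El.
  have zy : z != y by rewrite eq_sym (insub_yz Hr ur).
  split.
  + by rewrite /= E1 restr_all // wleaves_bld notin_all.
  + by rewrite /= E2 wleaves_bld rem_cat (negbTE yl).
  + by move=> E; exfalso; apply: ncher.
  + move=> _; split => //.
  have FPl x : x \in pleaves l -> FP (WNode (bld l (acc + fc l)) (elen l acc + 0) w' (elen r acc + a')) x = target x - acc.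
    move=> xl /=; rewrite wleaves_bld xl addr0; exact: FPe.
  have inw x : x \in pleaves r -> x != y -> x \in wleaves w'.
    by move=> xr xy; rewrite E2 mem_rem_uniq // inE xy xr.
  case: (classic (r = cherry)) => [Erc|Nrc].
  * subst r; have [Ew Ea] := E3 erefl; subst w' a'.
    split.
      move=> x; rewrite mem_cat => /orP [xl|xr] xy xz; last first.
        by move: xr; rewrite !inE (negbTE xy) (negbTE xz).
      rewrite FPl // xl lexx /= lerDl.
      by apply: mulr_ge0 => //; apply: addr_ge0; [exact: fc_ge0|exact: accf_ge0].
    rewrite /= wleaves_bld (negbTE zl) inE eqxx /= divr1 addr0 eqxx; lra.
  * have [Ea [B1 B2]] := E4 Nrc; subst a'.
    have s3 := insub_strict Hr Nrc.
    have fcr : fc r = eps by apply: fc_eps.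
    have er : elen r acc = eps * (size (pleaves r))%:R by rewrite elen_node ?fcr //; lia.
    have sw : size (wleaves w') = (size (pleaves r)).-1 by rewrite E2 size_rem.
    have [Q1 Q2] := andP (ratio_bounds s3).
    split.
      move=> x; rewrite mem_cat => /orP [xl|xr] xy xz.
        rewrite FPl // xl lexx /= lerDl.
        by apply: mulr_ge0 => //; apply: addr_ge0; [exact: fc_ge0|exact: accf_ge0].
      have xl := nl x xr.
      rewrite /= wleaves_bld (negbTE xl) inw // addr0 er sw xr fcr.
      have := B1 x xr xy xz; rewrite fcr => /andP [b1 b2].
      apply/andP; split; lra.
    rewrite /= wleaves_bld (negbTE zl) inw // addr0 er sw; move: B2; rewrite fcr; lra.
Qed.

Lemma FP_bld_gen t acc x : (1 < size (pleaves t))%N -> x \in pleaves t ->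
  FP (bld t acc) x = target x - acc.
Proof. by case: t => [x0|l r] //= _; apply: FP_bld. Qed.

End Cherry.

Lemma exists_cherry (X : finType) (t : ptree X) :
  (1 < size (pleaves t))%N -> exists y z, insub y z t.
Proof.
elim: t => [x0|l IHl r IHr] //= _.
case El: l => [a|l1 l2].
  case Er: r => [b|r1 r2].
    by exists a, b; apply: ins_here.
  have hs : (1 < size (pleaves r))%N.
    by rewrite Er /= size_cat; have := size_pleaves_gt0 r1; have := size_pleaves_gt0 r2; lia.
  have [y [z H]] := IHr hs.
  by exists y, z; rewrite -Er; apply: ins_r.
have hs : (1 < size (pleaves l))%N.
  by rewrite El /= size_cat; have := size_pleaves_gt0 l1; have := size_pleaves_gt0 l2; lia.
have [y [z H]] := IHl hs.
by exists y, z; rewrite -El; apply: ins_l.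
Qed.

Theorem theorem3 (R : realType) (X : finType) (T : ptree X) :
  phylo_tree T -> (2 <= #|X|)%N ->
  exists w : wtree X R,
    [/\ wshape w = T, pos_lengths w,
        (forall x1 x2 : X, x1 != x2 -> FP w x1 != FP w x2) &
        forall y : X, (forall x : X, FP w y <= FP w x) ->
          exists wt : wtree X R,
            [/\ induced (fun x => x != y) w = Some wt,
                (forall x1 x2 : X, x1 != y -> x2 != y -> x1 != x2 ->
                   FP wt x1 != FP wt x2) &
                forall z : X, z != y ->
                  (forall x : X, x != y -> FP w z <= FP w x) ->
                  forall x : X, x != y -> FP wt x <= FP wt z]].
Proof.
move=> PT n2.
have U : uniq (pleaves T) by rewrite (perm_uniq PT) enum_uniq.
have S : size (pleaves T) = #|X| by rewrite (perm_size PT) cardT.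
have M x : x \in pleaves T by rewrite (perm_mem PT) mem_enum.
have S1 : (1 < size (pleaves T))%N by rewrite S.
have [y [z H]] := exists_cherry S1.
have yz := insub_yz H U.
have zy : z != y by rewrite eq_sym.
pose n : R := #|X|%:R.
have n1 : 1 <= n by rewrite /n ler1n; lia.
have n0 : 0 < n by lra.
pose c : R := n + 3.
pose eps : R := (4 * n)^-1.
have hc : 0 < c by rewrite /c; lra.
have heps : 0 < eps by rewrite /eps invr_gt0; lra.
have epsn : eps * n = 1 / 4 by rewrite /eps; field; rewrite gt_eqF.
have ec : eps <= c.
  have : eps <= eps * n by rewrite ler_pMr.
  rewrite /c; lra.
pose rk (x : X) : R := (enum_rank x)%:R.
have rk0 x : 0 <= rk x by rewrite /rk ler0n.
have rkn x : rk x + 1 <= n by rewrite /rk /n natr1 ler_nat; exact: ltn_ord.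
pose tg x := if x == y then c + 1 else if x == z then c + 2 else c + 3 + rk x.
have tgy : tg y = c + 1 by rewrite /tg eqxx.
have tgz : tg z = c + 2 by rewrite /tg (negbTE zy) eqxx.
have tgo x : x != y -> x != z -> tg x = c + 3 + rk x by move=> xy xz; rewrite /tg (negbTE xy) (negbTE xz).
pose w := bld y z tg eps c T 0.
have FPw x : FP w x = tg x by rewrite /w FP_bld_gen ?M // subr0.
have Ao x : x != y -> x != z -> accf y z eps c T x <= 1 / 4.
  by move=> xy xz; rewrite -epsn /n -S; apply: accf_other.
have Ayz x : accf y z eps c T x <= c + 1 / 4.
  by rewrite -epsn /n -S; apply: accf_yz.
have tginj x1 x2 : x1 != x2 -> tg x1 != tg x2.
  move=> ne; apply/negP => /eqP E; move/negP: ne; apply; apply/eqP.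
  case: (eqVneq x1 y) => [e1|h1]; case: (eqVneq x2 y) => [e2|h2]; try by rewrite e1 e2.
  - case: (eqVneq x2 z) => [e2'|h2']; first by exfalso; move: E; rewrite e1 e2' tgy tgz; lra.
    by exfalso; move: E; rewrite e1 tgy tgo //; have := rk0 x2; lra.
  - case: (eqVneq x1 z) => [e1'|h1']; first by exfalso; move: E; rewrite e2 e1' tgy tgz; lra.
    by exfalso; move: E; rewrite e2 tgy tgo //; have := rk0 x1; lra.
  case: (eqVneq x1 z) => [e1'|h1']; case: (eqVneq x2 z) => [e2'|h2']; try by rewrite e1' e2'.
  - by exfalso; move: E; rewrite e1' tgz tgo //; have := rk0 x2; lra.
  - by exfalso; move: E; rewrite e2' tgz tgo //; have := rk0 x1; lra.
  move: E; rewrite !tgo // => /addrI /eqP; rewrite /rk eqr_nat => /eqP /val_inj.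
  exact: enum_rank_inj.
exists w; split.
- exact: wshape_bld.
- apply: pos_bld => // x _; rewrite add0r.
  case: (eqVneq x y) => [->|xy]; first by rewrite tgy; have := Ayz y; lra.
  case: (eqVneq x z) => [->|xz]; first by rewrite tgz; have := Ayz z; lra.
  by rewrite tgo //; have := Ao x xy xz; have := rk0 x; lra.
- by move=> x1 x2 ne; rewrite !FPw; apply: tginj.
move=> y' Hy'.
have ey : y' = y.
  apply/eqP; apply/negP => /negP ne.
  have := Hy' y; rewrite !FPw tgy.
  case: (eqVneq y' z) => [->|nz]; first by rewrite tgz; lra.
  by rewrite tgo //; have := rk0 y'; lra.
subst y'.
have [w' [a' [E1 E2 E3 E4]]] := key tg heps hc H U 0.
exists w'.
have zmin z' : z' != y -> (forall x, x != y -> FP w z' <= FP w x) -> z' = z.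
  move=> z'y Hz; apply/eqP; apply/negP => /negP ne.
  have := Hz z zy; rewrite !FPw tgz tgo //; have := rk0 z'; lra.
case: (classic (T = cherry y z)) => [ET|NT].
  have [Ew _] := E3 ET.
  have oz x : x != y -> x = z.
    by move=> xy; have := M x; rewrite ET !inE (negbTE xy) /= => /eqP.
  split.
  + by rewrite /induced E1.
  + by move=> x1 x2 h1 h2; rewrite (oz x1 h1) (oz x2 h2) eqxx.
  + by move=> z' z'y Hz x xy; rewrite (oz x xy) (oz z' z'y).
have [_ [B1 B2]] := E4 NT.
have Bo x : x != y -> x != z -> tg x <= FP w' x <= tg x + 1 / 2.
  move=> xy xz; have := B1 x (M x) xy xz; rewrite !subr0 => /andP [b1 b2].
  by apply/andP; split; have := Ao x xy xz; lra.
have Bz : 2 * c + 2 <= FP w' z by move: B2; rewrite subr0 tgz; lra.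
have Bo' x : x != y -> x != z -> FP w' x < FP w' z.
  move=> xy xz; have /andP [_ b] := Bo x xy xz; move: b; rewrite tgo //.
  have := rkn x; rewrite /c in Bz *; lra.
split.
- by rewrite /induced E1.
- move=> x1 x2 h1 h2 ne.
  case: (eqVneq x1 z) => [e1|n1'].
    by rewrite e1 gt_eqF // Bo' // -e1 eq_sym.
  case: (eqVneq x2 z) => [e2|n2'].
    by rewrite e2 lt_eqF // Bo'.
  have rne : (enum_rank x1 != enum_rank x2) by apply/negP => /eqP /enum_rank_inj /eqP; apply/negP.
  have /andP [a1 a2] := Bo x1 h1 n1'; have /andP [b1 b2] := Bo x2 h2 n2'.
  move: a1 a2 b1 b2; rewrite !tgo // /rk.
  case: (ltngtP (enum_rank x1) (enum_rank x2)) => [lt|gt|eq].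
  + have : (enum_rank x1)%:R + 1 <= (enum_rank x2)%:R :> R by rewrite natr1 ler_nat.
    move=> h a1 a2 b1 b2; clear lt rne; rewrite lt_eqF //; lra.
  + have : (enum_rank x2)%:R + 1 <= (enum_rank x1)%:R :> R by rewrite natr1 ler_nat.
    move=> h a1 a2 b1 b2; clear gt rne; rewrite gt_eqF //; lra.
  + move=> *; exfalso; move/eqP: rne; apply; exact: val_inj.
- move=> z' z'y Hz; rewrite (zmin z' z'y Hz) => x xy.
  case: (eqVneq x z) => [->|xz]; first exact: lexx.
  exact: ltW (Bo' x xy xz).
Qed.
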